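(* For a prime $p$ let $S_p$ be the set of words $w\in\{B,R\}^p$ such that for no $r\in\{1,\dots,p-1\}$ and $i\in\{0,\dots,p-1\}$ are $w_i,w_{i+r},w_{i+2r},w_{i+3r}$ (indices mod $p$) all equal. Then $|S_5|=20$, $S_5$ splits into 4 orbits under $D_5$ and 2 orbits under $D_5\times\langle\tau\rangle$; and $|S_{11}|=44$, $S_{11}$ splits into 2 orbits under $D_{11}$ and 1 orbit under $D_{11}\times\langle\tau\rangle$. In particular $\texttt{BBBRR}\in S_5$ and $\texttt{BBBRBBRBRRR}\in S_{11}$.
   Context: The dihedral group $D_p$ acts on $\{B,R\}^p$ (indices mod $p$) via rotations $(\rho_k w)_i=w_{i-k}$ and reflections $(\sigma_k w)_i=w_{k-i}$. The global color swap $\tau$ interchanges $B\leftrightarrow R$ in every position. *)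

(* Defs.v *)
From mathcomp Require Import all_boot.
Set Implicit Arguments. Unset Strict Implicit. Unset Printing Implicit Defensive.

Definition color := bool.
Definition B : color := true.
Definition R : color := false.

Definition word (p : nat) := (p.-tuple color)%type.

Definition at_ (p : nat) (w : word p) (k : nat) : color := nth B w (k %% p).

(* rotation rho_k : (rho_k w)_i = w_{i-k} *)
Definition rho (p : nat) (k : nat) (w : word p) : word p :=
  [tuple at_ w (i + (p - k %% p)) | i < p].
(* reflection sigma_k : (sigma_k w)_i = w_{k-i} *)
Definition sigma (p : nat) (k : nat) (w : word p) : word p :=
  [tuple at_ w (k + (p - i)) | i < p].
Definition tau (p : nat) (w : word p) : word p := [tuple negb (tnth w i) | i < p].

Definition S (p : nat) : {set word p} :=
  [set w : word p | [forall r : 'I_p, (0 < r) ==> [forall i : 'I_p,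
     ~~ [&& at_ w i == at_ w (i + r), at_ w (i + r) == at_ w (i + 2 * r)
          & at_ w (i + 2 * r) == at_ w (i + 3 * r)]]]].

Definition Dorbit (p : nat) (w : word p) : {set word p} :=
  [set rho k w | k : 'I_p] :|: [set sigma k w | k : 'I_p].

Definition DTorbit (p : nat) (w : word p) : {set word p} :=
  Dorbit w :|: [set tau x | x in Dorbit w].

(* number of orbits of a set A (assumed invariant) *)
Definition num_Dorbits (p : nat) (A : {set word p}) : nat :=
  #|[set Dorbit w | w in A]|.
Definition num_DTorbits (p : nat) (A : {set word p}) : nat :=
  #|[set DTorbit w | w in A]|.

(* Main.v *)
Require Import Defs.
From mathcomp Require Import all_boot.
From mathcomp Require Import zify.

Fixpoint tw (n : nat) : seq (n.-tuple bool) :=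
  match n with 0 => [:: [tuple]] | n'.+1 => [seq cons_tuple b t | b <- [:: true; false], t <- tw n'] end.

Lemma mem_tw n (t : n.-tuple bool) : t \in tw n.
Proof.
elim: n t => [|n IH] t /=; first by rewrite tuple0 mem_seq1.
rewrite (tuple_eta t).
have -> : [tuple of thead t :: behead t] = cons_tuple (thead t) [tuple of behead t] by apply: val_inj.
by case: (thead t); rewrite /= mem_cat ?cats0 map_f ?orbT.
Qed.

Definition Sb {p} (w : word p) := all (fun r => all (fun i =>
     ~~ [&& at_ w i == at_ w (i + r), at_ w (i + r) == at_ w (i + 2 * r)
          & at_ w (i + 2 * r) == at_ w (i + 3 * r)]) (iota 0 p)) (iota 1 p.-1).

Lemma SE p (w : word p) : (w \in S p) = Sb w.
Proof.
rewrite inE; apply/forallP/allP => [H r | H r].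
  rewrite mem_iota => /andP [r1 r2].
  have rp : r < p by case: p {w H} r2 => //= n; lia.
  move: (H (Ordinal rp)) => /= /implyP /(_ r1) /forallP H2.
  apply/allP => i; rewrite mem_iota add0n => ip; exact: (H2 (Ordinal ip)).
apply/implyP => r0; apply/forallP => i.
have : val r \in iota 1 p.-1.
  by rewrite mem_iota r0 /=; have := ltn_ord r; lia.
move/H/allP; apply; by rewrite mem_iota add0n ltn_ord.
Qed.

Definition SL p : seq (word p) := filter (@Sb p) (tw p).

Lemma SLE p : SL p =i S p.
Proof. by move=> w; rewrite mem_filter SE mem_tw andbT. Qed.

Lemma card_seq (T : finType) (s : seq T) : #|s| = size (undup s).
Proof. rewrite -(eq_card (mem_undup s)); apply/card_uniqP; exact: undup_uniq. Qed.

Lemma card_imset_seq (T U : finType) (f : T -> U) (A : {set T}) (s : seq T) :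
  s =i A -> #|f @: A| = #|map f s|.
Proof.
move=> sA; apply: eq_card => y; apply/imsetP/mapP => [[x xA ->]|[x xs ->]].
  by exists x; rewrite // sA.
by exists x; rewrite // -sA.
Qed.

Fixpoint ucount {T} (r : T -> T -> bool) (s : seq T) :=
  match s with [::] => 0 | x :: s' => if has (r x) s' then ucount r s' else (ucount r s').+1 end.

Lemma size_undup_map (T U : eqType) (f : T -> U) s :
  size (undup (map f s)) = ucount (fun x y => f x == f y) s.
Proof.
elim: s => //= x s IH.
have -> : (f x \in map f s) = has (fun y => f x == f y) s.
  apply/mapP/hasP => [[y ys ->]|[y ys /eqP ->]]; by exists y.
by case: has => //=; rewrite IH.
Qed.

Lemma ucount_ext T (r1 r2 : T -> T -> bool) s : (forall x y, r1 x y = r2 x y) ->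
  ucount r1 s = ucount r2 s.
Proof.
move=> E; elim: s => //= x s ->.
by rewrite (eq_has (E x)).
Qed.

(* computable versions *)
Definition rhoL p k (w : word p) := [seq at_ w (i + (p - k %% p)) | i <- iota 0 p].
Definition sigmaL p k (w : word p) := [seq at_ w (k + (p - i)) | i <- iota 0 p].
Lemma size_rhoL p k w : size (@rhoL p k w) == p. Proof. by rewrite size_map size_iota. Qed.
Lemma size_sigmaL p k w : size (@sigmaL p k w) == p. Proof. by rewrite size_map size_iota. Qed.
Lemma size_tauL p (w : word p) : size (map negb w) == p. Proof. by rewrite size_map size_tuple. Qed.
Definition rhoT p k w : word p := Tuple (size_rhoL p k w).
Definition sigmaT p k w : word p := Tuple (size_sigmaL p k w).
Definition tauT p (w : word p) : word p := Tuple (size_tauL p w).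

Lemma mktupleE p (G : nat -> bool) : val [tuple G (val i) | i < p] = map G (iota 0 p).
Proof. by rewrite /= -val_enum_ord -map_comp. Qed.

Lemma rhoE p k w : rho k w = rhoT p k w.
Proof. apply: val_inj; exact: (mktupleE p (fun i => at_ w (i + (p - k %% p)))). Qed.
Lemma sigmaE p k w : sigma k w = sigmaT p k w.
Proof. apply: val_inj; exact: (mktupleE p (fun i => at_ w (k + (p - i)))). Qed.
Lemma tauE p w : tau w = tauT p w.
Proof.
apply: val_inj => /=.
rewrite /= -[in RHS](map_tnth_enum w) -map_comp enumT.
by rewrite -map_comp.
Qed.

Definition keyD p (w : word p) := [seq rhoT p k w | k <- iota 0 p] ++ [seq sigmaT p k w | k <- iota 0 p].
Definition keyDT p (w : word p) := keyD p w ++ map (@tauT p) (keyD p w).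

Lemma DorbitE p (w : word p) : Dorbit w = [set z in keyD p w].
Proof.
apply/setP => z; rewrite !inE mem_cat.
congr orb.
  apply/imsetP/mapP => [[k _ ->]|[k]]; first by exists (val k); [rewrite mem_iota add0n ltn_ord | exact: rhoE].
  rewrite mem_iota add0n => kp ->; by exists (Ordinal kp); [|rewrite rhoE].
apply/imsetP/mapP => [[k _ ->]|[k]]; first by exists (val k); [rewrite mem_iota add0n ltn_ord | exact: sigmaE].
rewrite mem_iota add0n => kp ->; by exists (Ordinal kp); [|rewrite sigmaE].
Qed.

Lemma imset_seq (T U : finType) (f : T -> U) (s : seq T) : f @: [set z in s] = [set z in map f s].
Proof.
apply/setP => y; rewrite inE; apply/imsetP/mapP => [[x]|[x xs ->]].
  by rewrite inE => xs ->; exists x.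
by exists x; rewrite ?inE.
Qed.

Lemma DTorbitE p (w : word p) : DTorbit w = [set z in keyDT p w].
Proof.
rewrite /DTorbit DorbitE (eq_imset _ (@tauE p)) imset_seq.
by apply/setP => z; rewrite !inE /keyDT mem_cat [in RHS]mem_cat /keyD mem_cat.
Qed.

Definition req {T : eqType} (a b : seq T) := all (mem b) a && all (mem a) b.

Lemma req_set (T : finType) (a b : seq T) : ([set z in a] == [set z in b]) = req a b.
Proof.
apply/eqP/andP => [E|[/allP H1 /allP H2]].
  split; apply/allP => z zs; move/setP: E => /(_ z); rewrite !inE zs; [move=> <- | move=> ->].
  by []. by []. apply/setP => z; rewrite !inE; apply/idP/idP; [exact: H1 | exact: H2].
Qed.

Lemma numD p : num_Dorbits (S p) = ucount (fun x y => req (keyD p x) (keyD p y)) (SL p).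
Proof.
rewrite /num_Dorbits (@card_imset_seq _ _ _ _ _ (@SLE p)) card_seq size_undup_map.
by apply: ucount_ext => x y; rewrite !DorbitE req_set.
Qed.

Lemma numDT p : num_DTorbits (S p) = ucount (fun x y => req (keyDT p x) (keyDT p y)) (SL p).
Proof.
rewrite /num_DTorbits (@card_imset_seq _ _ _ _ _ (@SLE p)) card_seq.
rewrite size_undup_map.
by apply: ucount_ext => x y; rewrite !DTorbitE req_set.
Qed.

Lemma cardS p : #|S p| = size (undup (SL p)).
Proof. by rewrite -card_seq; apply: eq_card => w; rewrite SLE. Qed.

Theorem mainTheorem11 :
  (#|S 5| = 20 /\ num_Dorbits (S 5) = 4 /\ num_DTorbits (S 5) = 2) /\
  (#|S 11| = 44 /\ num_Dorbits (S 11) = 2 /\ num_DTorbits (S 11) = 1) /\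
  ([tuple B; B; B; R; R] : word 5) \in S 5 /\
  ([tuple B; B; B; R; B; B; R; B; R; R; R] : word 11) \in S 11.
Proof.
rewrite !cardS !numD !numDT !SE.
split; first by split; [|split]; vm_compute; reflexivity.
split; first by split; [|split]; vm_compute; reflexivity.
by split; vm_compute; reflexivity.
Qed.
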